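(* Let $m,j,k$ be positive integers. Suppose that the outcome class of $G_{m,j}$ is $H$ and that the outcome class of $G_{m,k}$ is $H$ or $2$. Then there exists $N_0$ such that for all integers $N\ge N_0$, the outcome class of $G_{m,N\gcd(j,k)}$ is $H$.
   Context: Domineering is a two-player game played on a rectangular grid of unit squares. The players alternate placing dominoes, each covering two adjacent unoccupied squares; the player Vertical must place dominoes vertically (covering two squares in the same column), and the player Horizontal must place them horizontally (covering two squares in the same row). A player with no legal move on her turn loses. $G_{m,n}$ denotes the empty board with vertical dimension $m$ (number of rows) and horizontal dimension $n$ (number of columns). Every position has one of four outcome classes under optimal play: $V$ (Vertical wins whoever moves first), $H$ (Horizontal wins whoever moves first), $1$ (the player who moves first wins), $2$ (the player who moves second wins). *)

(* Defs.v *)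
(* Domineering on an m x n board. *)
From mathcomp Require Import all_boot.
Set Implicit Arguments. Unset Strict Implicit. Unset Printing Implicit Defensive.

Definition cell (m n : nat) := ('I_m * 'I_n)%type.

Definition vadj m n (a b : cell m n) : bool :=
  (a.2 == b.2) && (a.1.+1 == b.1 :> nat).
Definition hadj m n (a b : cell m n) : bool :=
  (a.1 == b.1) && (a.2.+1 == b.2 :> nat).

(* wins_fuel f vert E : the player to move (Vertical if vert, else Horizontal)
   wins from the position whose set of empty cells is E, computed with
   recursion depth f.  With f > #|E| the value is the true game value, since
   each move removes two empty cells. *)
Fixpoint wins_fuel m n (f : nat) (vert : bool) (E : {set cell m n}) : bool :=
  match f with
  | 0 => false
  | f'.+1 =>
      [exists ab : cell m n * cell m n,
        [&& (if vert then vadj ab.1 ab.2 else hadj ab.1 ab.2),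
            ab.1 \in E, ab.2 \in E &
            ~~ wins_fuel f' (~~ vert) ((E :\ ab.1) :\ ab.2)]]
  end.

Definition first_wins m n (vert : bool) (E : {set cell m n}) : bool :=
  wins_fuel #|E|.+1 vert E.

Inductive outcome := OutV | OutH | Out1 | Out2.

Definition outcome_of m n (E : {set cell m n}) : outcome :=
  match first_wins true E, first_wins false E with
  | true, true => Out1
  | true, false => OutV
  | false, true => OutH
  | false, false => Out2
  end.

(* Outcome class of the empty board G_{m,n}: m rows, n columns. *)
Definition outcomeG (m n : nat) : outcome := outcome_of [set: cell m n].

(* Main.v *)
Require Import Defs.
From mathcomp Require Import all_boot.
From mathcomp Require Import zify.
Set Implicit Arguments. Unset Strict Implicit. Unset Printing Implicit Defensive.

Lemma arith1 (a a' b k : nat) : a' < a -> a + b <= k.+1 -> a' + b <= k.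
Proof. lia. Qed.

Section S.
Variables m n : nat.

Lemma wins_fuel_stable : forall f g v (E: {set cell m n}),
  #|E| < f -> #|E| < g -> wins_fuel f v E = wins_fuel g v E.
Proof.
elim=> [|f IH] [|g] v E //=; try by rewrite ltn0.
move=> hf hg; apply: eq_existsb => ab.
have [h1|] := boolP (ab.1 \in E); last by rewrite !andbF.
have c1: #|E :\ ab.1 :\ ab.2| <= #|E :\ ab.1| by apply subset_leq_card; apply subD1set.
have c2: #|E :\ ab.1| < #|E| by rewrite (cardsD1 ab.1 E) h1 add1n ltnSn.
have c3 := leq_ltn_trans c1 c2.
rewrite (IH g) //.
  by rewrite -ltnS; apply: leq_trans hf; rewrite ltnS; exact: c3.
by rewrite -ltnS; apply: leq_trans hg; rewrite ltnS; exact: c3.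
Qed.

Lemma fw_unfold v (E : {set cell m n}) : first_wins v E =
  [exists ab : cell m n * cell m n,
    [&& (if v then vadj ab.1 ab.2 else hadj ab.1 ab.2),
        ab.1 \in E, ab.2 \in E &
        ~~ first_wins (~~ v) ((E :\ ab.1) :\ ab.2)]].
Proof.
rewrite /first_wins /=; apply: eq_existsb => ab.
have [h1|] := boolP (ab.1 \in E); last by rewrite !andbF.
have c1: #|E :\ ab.1 :\ ab.2| <= #|E :\ ab.1| by apply subset_leq_card; apply subD1set.
have c2: #|E :\ ab.1| < #|E| by rewrite (cardsD1 ab.1 E) h1 add1n ltnSn.
have c3 := leq_ltn_trans c1 c2.
by rewrite (@wins_fuel_stable #|E| #|E :\ ab.1 :\ ab.2|.+1).
Qed.

Lemma fw_set0 v : first_wins v (set0 : {set cell m n}) = false.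
Proof. rewrite fw_unfold; apply/existsP => -[ab]; by rewrite inE andbF. Qed.

Definition sep (A B : {set cell m n}) := forall x y, x \in A -> y \in B ->
  [&& x != y, ~~ vadj x y & ~~ vadj y x].

Lemma sep_sym A B : sep A B -> sep B A.
Proof.
move=> h x y hx hy; case/and3P: (h y x hy hx) => a b c.
by apply/and3P; split => //; rewrite eq_sym.
Qed.

Lemma moveA A B x y : sep A B -> x \in A -> y \in A ->
  (A :|: B) :\ x :\ y = (A :\ x :\ y) :|: B.
Proof.
move=> hs hx hy; apply/setP => z; rewrite !inE.
case hz: (z \in B); rewrite ?orbT ?orbF ?andbT //.
case/andP: (hs x z hx hz) => a _; case/andP: (hs y z hy hz) => b _.
by rewrite (eq_sym z x) (eq_sym z y) a b.
Qed.

Lemma sum_lemma : forall k (A B : {set cell m n}), #|A| + #|B| <= k -> sep A B ->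
 (~~ first_wins true A -> ~~ first_wins true B -> ~~ first_wins true (A :|: B)) /\
 (first_wins false A -> ~~ first_wins true B -> first_wins false (A :|: B)).
Proof.
elim=> [|k IH] A B hk hs.
  have eA : A = set0 by apply: cards0_eq; lia.
  have eB : B = set0 by apply: cards0_eq; lia.
  by rewrite eA eB setU0 !fw_set0.
have cardA : forall x y, x \in A -> #|A :\ x :\ y| < #|A|.
  move=> x y hx.
  have c1: #|A :\ x :\ y| <= #|A :\ x| by apply subset_leq_card; apply subD1set.
  have c2: #|A :\ x| < #|A| by rewrite (cardsD1 x A) hx add1n ltnSn.
  lia.
have cardB : forall x y, x \in B -> #|B :\ x :\ y| < #|B|.
  move=> x y hx.
  have c1: #|B :\ x :\ y| <= #|B :\ x| by apply subset_leq_card; apply subD1set.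
  have c2: #|B :\ x| < #|B| by rewrite (cardsD1 x B) hx add1n ltnSn.
  lia.
split.
- move=> nA nB; apply/negP; rewrite fw_unfold => /existsP [[x y] /= /and4P [hv hx hy hw]].
  move: hx hy; rewrite !inE => hx hy.
  case/orP: hx => hx; case/orP: hy => hy.
  + have h1: first_wins false (A :\ x :\ y).
      move: nA; rewrite fw_unfold negb_exists => /forallP /(_ (x,y)) /=.
      by rewrite hv hx hy /= negbK.
    have := cardA x y hx => c.
    have [_ H2] := IH (A :\ x :\ y) B (arith1 c hk)
       (fun u v hu hv => hs u v (subsetP (subset_trans (subD1set _ _) (subD1set _ _)) u hu) hv).
    by move: hw; rewrite moveA // H2.
  + by case/and3P: (hs x y hx hy) => _ /negP.
  + by case/and3P: (hs y x hy hx) => _ _ /negP.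
  + have h1: first_wins false (B :\ x :\ y).
      move: nB; rewrite fw_unfold negb_exists => /forallP /(_ (x,y)) /=.
      by rewrite hv hx hy /= negbK.
    have := cardB x y hx => c.
    have hk' : #|B| + #|A| <= k.+1 by rewrite addnC.
    have [_ H2] := IH (B :\ x :\ y) A (arith1 c hk')
       (fun u v hu hv => sep_sym hs (subsetP (subset_trans (subD1set _ _) (subD1set _ _)) u hu) hv).
    by move: hw; rewrite setUC moveA ?H2 //; apply: sep_sym.
- move=> hA nB; move: hA; rewrite fw_unfold => /existsP [[x y] /= /and4P [hv hx hy hw]].
  rewrite fw_unfold; apply/existsP; exists (x,y); rewrite /= !inE hx hy hv /=.
  have := cardA x y hx => c.
  have [H1 _] := IH (A :\ x :\ y) B (arith1 c hk)
       (fun u v hu hv => hs u v (subsetP (subset_trans (subD1set _ _) (subD1set _ _)) u hu) hv).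
  by rewrite moveA // H1.
Qed.

End S.

Lemma imsetD1_inj (aT rT : finType) (f : aT -> rT) (E : {set aT}) a :
  injective f -> f @: (E :\ a) = f @: E :\ f a.
Proof.
move=> fi; apply/setP => z; rewrite !inE.
apply/imsetP/andP => [[x hx ->]|[hz /imsetP [x hx ez]]]; last subst z.
  by move: hx; rewrite !inE (inj_eq fi) => /andP [-> h]; rewrite imset_f.
by exists x => //; rewrite !inE hx andbT; rewrite (inj_eq fi) in hz.
Qed.

Lemma embed m w n (f : cell m w -> cell m n) : injective f ->
  (forall x y, vadj (f x) (f y) = vadj x y) -> (forall x y, hadj (f x) (f y) = hadj x y) ->
  forall fu v (E : {set cell m w}), wins_fuel fu v (f @: E) = wins_fuel fu v E.
Proof.
move=> fi hv hh; elim=> [|fu IH] v E //=.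
apply/existsP/existsP => [[[x y] /= /and4P[ha hx hy hw]] | [[x y] /= /and4P [ha hx hy hw]]].
  case/imsetP: hx => x' hx' ex; case/imsetP: hy => y' hy' ey; subst x y.
  exists (x', y'); rewrite /= hx' hy'.
  rewrite -!imsetD1_inj // IH in hw; rewrite hw andbT.
by move: ha; case: (v) => /=; rewrite ?hv ?hh ?andbT.
exists (f x, f y); rewrite /= !imset_f // -!imsetD1_inj // IH hw andbT.
by move: ha; case: (v) => /=; rewrite ?hv ?hh ?andbT.
Qed.

Lemma fw_embed m w n (f : cell m w -> cell m n) : injective f ->
  (forall x y, vadj (f x) (f y) = vadj x y) -> (forall x y, hadj (f x) (f y) = hadj x y) ->
  forall v (E : {set cell m w}), first_wins v (f @: E) = first_wins v E.
Proof. by move=> fi hv hh v E; rewrite /first_wins card_imset // embed. Qed.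

Section Board.
Variables m a b : nat.
Definition fL (c : cell m a) : cell m (a + b) := (c.1, lshift b c.2).
Definition fR (c : cell m b) : cell m (a + b) := (c.1, rshift a c.2).

Lemma fL_inj : injective fL.
Proof. by move=> [i c] [i' c'] [-> /val_inj ->]. Qed.
Lemma fR_inj : injective fR.
Proof. by move=> [i c] [i' c'] [-> /addnI /val_inj ->]. Qed.
Lemma fL_v x y : vadj (fL x) (fL y) = vadj x y.
Proof. by rewrite /vadj /= (inj_eq (@lshift_inj _ _)). Qed.
Lemma fL_h x y : hadj (fL x) (fL y) = hadj x y.
Proof. by []. Qed.
Lemma fR_v x y : vadj (fR x) (fR y) = vadj x y.
Proof. by rewrite /vadj /= (inj_eq (@rshift_inj _ _)). Qed.
Lemma fR_h x y : hadj (fR x) (fR y) = hadj x y.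
Proof. by rewrite /hadj /= -addnS eqn_add2l. Qed.

Lemma lr_neq (c : 'I_a) (c' : 'I_b) : (lshift b c == rshift a c') = false.
Proof. rewrite -val_eqE /=; apply/eqP; have := ltn_ord c; lia. Qed.

Lemma eT : [set: cell m (a + b)] = fL @: setT :|: fR @: setT.
Proof.
apply/setP => -[i c]; rewrite !inE; symmetry.
rewrite -(splitK c); case: (split c) => [j|k] /=.
  by apply/orP; left; apply/imsetP; exists (i, j).
by apply/orP; right; apply/imsetP; exists (i, k).
Qed.

Lemma sepLR : sep (fL @: setT) (fR @: setT).
Proof.
move=> x y /imsetP [[i c] _ ->] /imsetP [[i' c'] _ ->].
rewrite /vadj /fL /fR /=; have e1 := lr_neq c c'; rewrite e1 (eq_sym (rshift a c')) e1 /= !andbT.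
by apply/negP => /eqP [_ h]; have := ltn_ord c; lia.
Qed.

Lemma combine :
 (~~ first_wins true [set: cell m a] -> ~~ first_wins true [set: cell m b] ->
   ~~ first_wins true [set: cell m (a + b)]) /\
 (first_wins false [set: cell m a] -> ~~ first_wins true [set: cell m b] ->
   first_wins false [set: cell m (a + b)]).
Proof.
have [H1 H2] := @sum_lemma _ _ _ _ _ (leqnn _) sepLR.
rewrite eT -(fw_embed fL_inj fL_v fL_h true) -(fw_embed fR_inj fR_v fR_h true)
  -(fw_embed fL_inj fL_v fL_h false).
by split.
Qed.
End Board.
Lemma arith_rep (j k N : nat) : 0 < j -> 0 < k -> 2 * j * k <= N ->
  exists x y, N * gcdn j k = x.+1 * j + y * k.
Proof.
move=> hj hk hN.
case: (egcdnP k hj) => u v e _.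
have hg : 0 < gcdn j k by rewrite gcdn_gt0 hj.
move: e hg; set g := gcdn j k => e hg.
have eNu := divn_eq (N * u) k.
have hr : (N * u) %% k < k by rewrite ltn_pmod.
move: eNu hr; set q := (N * u) %/ k; set r := (N * u) %% k => eNu hr.
have h1 : q*j*k + r*j = N*v*k + N*g.
  have : N * u * j = N * (v * k + g) by rewrite -e mulnA.
  rewrite eNu; nia.
have h0 : r * j < k * j by rewrite ltn_pmul2r.
have h2 : (N*v + j) * k < q*j * k by nia.
have h3 : N*v + j < q*j by rewrite -(ltn_pmul2r hk).
exists (r + k).-1, (q*j - N*v - j).
have -> : (r + k).-1.+1 = r + k by lia.
nia.
Qed.

Theorem proposition3p2 (m j k : nat) :
  0 < m -> 0 < j -> 0 < k ->
  outcomeG m j = OutH ->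
  (outcomeG m k = OutH \/ outcomeG m k = Out2) ->
  exists N0 : nat, forall N : nat, N0 <= N -> outcomeG m (N * gcdn j k) = OutH.
Proof.
move=> _ hj hk hJ hK.
have [J1 J2] : first_wins false [set: cell m j] /\ ~~ first_wins true [set: cell m j].
  move: hJ; rewrite /outcomeG /outcome_of.
  by case: (first_wins true _); case: (first_wins false _).
have K2 : ~~ first_wins true [set: cell m k].
  move: hK; rewrite /outcomeG /outcome_of.
  by case: (first_wins true _); case: (first_wins false _) => -[].
have key : forall x y, first_wins false [set: cell m (x.+1 * j + y * k)] /\
                      ~~ first_wins true [set: cell m (x.+1 * j + y * k)].
  move=> x y; elim: y => [|y [IH1 IH2]].
    elim: x => [|x [IH1 IH2]]; first by rewrite mul1n addn0.
    have -> : x.+2 * j + 0 * k = (x.+1 * j + 0 * k) + j by rewrite !mulSn; lia.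
    have [C1 C2] := combine m (x.+1 * j + 0 * k) j.
    by split; [apply: C2 | apply: C1].
  have -> : x.+1 * j + y.+1 * k = (x.+1 * j + y * k) + k by rewrite mulSn; lia.
  have [C1 C2] := combine m (x.+1 * j + y * k) k.
  by split; [apply: C2 | apply: C1].
exists (2 * j * k) => N hN.
have [x [y ->]] := arith_rep hj hk hN.
have [A1 A2] := key x y.
by rewrite /outcomeG /outcome_of (negbTE A2) A1.
Qed.
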